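(* Let $m\ge2$, $\lambda\in\mathbb{D}$, $\mathcal{D}=\{d_1,\ldots,d_m\}\subset\mathbb{C}$, and let $E=\{\sum_{n=0}^\infty a_n\lambda^n:a_n\in\mathcal{D}\}$ be the attractor of the IFS $\{f_j(z)=\lambda z+d_j\}_{j=1}^m$. Assume $E$ is connected and the overlap set $\mathcal{O}=\bigcup_{i\ne j}(E_i\cap E_j)$, $E_j=f_j(E)$, is finite. Suppose in addition there exists $C_1>0$ such that for all sufficiently large $n\in\mathbb{N}$: whenever $f\in\mathcal{F}$, $g\in\mathcal{B}$ and $|f\wedge g|=n$, then $|g(\lambda)|\ge C_1|\lambda|^n$. Then $E$ has bounded turning.
   Context: $\mathcal{B}$ is the set of power series $f(z)=\sum_{n\ge0}c_nz^n$ with $c_n\in\mathcal{D}-\mathcal{D}=\{d_i-d_j\}$ for all $n$ and $c_0\ne0$; $\mathcal{F}=\{f\in\mathcal{B}:f(\lambda)=0\}$. For power series $f,g$, $|f\wedge g|=\min\{k\ge0: f^{(k+1)}(0)\ne g^{(k+1)}(0)\}$ (the degree of their maximal common initial part). A connected set $X\subset\mathbb{C}$ has bounded turning if there is $L$ such that for all $z_0,z_1\in X$ there is a connected set $[z_0,z_1]\subset X$ containing $z_0,z_1$ with $\operatorname{diam}[z_0,z_1]\le L|z_0-z_1|$. *)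

(* Defs.v *)
From Stdlib Require Import Reals.
From Coquelicot Require Import Coquelicot.
Open Scope C_scope.

Definition pseries_sum (c : nat -> C) (z v : C) : Prop :=
  @is_series C_AbsRing C_NormedModule (fun n => c n * pow_n z n) v.

Definition in_digits (m : nat) (d : nat -> C) (x : C) : Prop :=
  exists i, (i < m)%nat /\ x = d i.

Definition attractor (m : nat) (d : nat -> C) (lam : C) (z : C) : Prop :=
  exists a : nat -> C, (forall n, in_digits m d (a n)) /\ pseries_sum a lam z.

Definition piece (m : nat) (d : nat -> C) (lam : C) (j : nat) (z : C) : Prop :=
  exists w, attractor m d lam w /\ z = lam * w + d j.

Definition overlap (m : nat) (d : nat -> C) (lam : C) (z : C) : Prop :=
  exists i j, (i < m)%nat /\ (j < m)%nat /\ i <> j /\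
    piece m d lam i z /\ piece m d lam j z.

Definition finite_set (X : C -> Prop) : Prop :=
  exists l : list C, forall z, X z -> List.In z l.

(* Coefficient sequences of elements of B: c_n in D - D, c_0 <> 0. *)
Definition in_B (m : nat) (d : nat -> C) (c : nat -> C) : Prop :=
  (forall n, exists i j, (i < m)%nat /\ (j < m)%nat /\ c n = d i - d j) /\
  c 0%nat <> 0.

Definition in_F (m : nat) (d : nat -> C) (lam : C) (c : nat -> C) : Prop :=
  in_B m d c /\ pseries_sum c lam 0.

(* |f ^ g| = n, i.e. n = min { k >= 0 : f^(k+1)(0) <> g^(k+1)(0) }:
   coefficients of degree 1..n agree and those of degree n+1 differ. *)
Definition common_part (f g : nat -> C) (n : nat) : Prop :=
  (forall k, (k < n)%nat -> f (S k) = g (S k)) /\ f (S n) <> g (S n).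

Definition connected_set (X : C -> Prop) : Prop :=
  forall U V : C -> Prop, @open C_UniformSpace U -> @open C_UniformSpace V ->
    (forall z, X z -> U z \/ V z) ->
    (exists z, X z /\ U z) -> (exists z, X z /\ V z) ->
    exists z, X z /\ U z /\ V z.

(* Bounded turning; diam Y <= L|z0 - z1| is written out as a bound on all
   pairwise distances in Y. *)
Definition bounded_turning (X : C -> Prop) : Prop :=
  connected_set X /\
  exists L : R, forall z0 z1, X z0 -> X z1 ->
    exists Y : C -> Prop,
      (forall z, Y z -> X z) /\ connected_set Y /\ Y z0 /\ Y z1 /\
      (forall y y', Y y -> Y y' -> (Cmod (y - y') <= L * Cmod (z0 - z1))%R).

(* Main.v *)
Require Import Defs.
From Stdlib Require Import Reals Lra Lia ClassicalEpsilon Classical.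
From Coquelicot Require Import Coquelicot.
Open Scope C_scope.

Lemma Cmod_pow_n (z : C) k : Cmod (pow_n z k) = (Cmod z ^ k)%R.
Proof.
  induction k; simpl.
  - apply Cmod_1.
  - change (Cmod (z * pow_n z k) = (Cmod z * Cmod z ^ k)%R).
    rewrite Cmod_mult, IHk; reflexivity.
Qed.

Lemma ps_exists (lam : C) (B : R) (c : nat -> C) :
  (Cmod lam < 1)%R -> (forall k, (Cmod (c k) <= B)%R) -> exists v, pseries_sum c lam v.
Proof.
  intros Hl Hc.
  assert (H : @ex_series C_AbsRing C_CompleteNormedModule (fun n => c n * pow_n lam n)).
  { apply (ex_series_le _ (fun n => (B * Cmod lam ^ n)%R)).
    - intros n.
      change (Cmod (c n * pow_n lam n) <= B * Cmod lam ^ n)%R.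
      rewrite Cmod_mult, Cmod_pow_n.
      apply Rmult_le_compat_r. apply pow_le, Cmod_ge_0. apply Hc.
    - exists (B * / (1 - Cmod lam))%R.
      apply (is_series_scal (V := R_NormedModule) B (fun n => (Cmod lam ^ n)%R)).
      apply is_series_geom. rewrite Rabs_pos_eq. exact Hl. apply Cmod_ge_0. }
  destruct H as [v Hv]. exists v. exact Hv.
Qed.

Lemma ps_unique (lam : C) c v w : pseries_sum c lam v -> pseries_sum c lam w -> v = w.
Proof.
  intros H1 H2. unfold pseries_sum, is_series in *.
  exact (@filterlim_locally_unique nat C_AbsRing C_NormedModule eventually _ _ v w H1 H2).
Qed.

Lemma ps_minus (lam : C) a b v w : pseries_sum a lam v -> pseries_sum b lam w ->
  pseries_sum (fun k => a k - b k) lam (v - w).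
Proof.
  intros Ha Hb. unfold pseries_sum in *.
  generalize (is_series_minus _ _ _ _ Ha Hb). apply is_series_ext.
  intros n. change ((a n * pow_n lam n) + - (b n * pow_n lam n) = (a n - b n) * pow_n lam n).
  ring.
Qed.

Lemma ps_step (lam : C) a z w : pseries_sum a lam z -> pseries_sum (fun j => a (S j)) lam w ->
  z = a 0%nat + lam * w.
Proof.
  intros Hz Hw.
  apply (ps_unique lam a). exact Hz.
  unfold pseries_sum in *.
  apply is_series_decr_1.
  assert (E : lam * w = @plus C_NormedModule (a 0%nat + lam * w) (@opp C_NormedModule (a 0%nat * pow_n lam 0))).
  { change (lam * w = (a 0%nat + lam * w) + - (a 0%nat * 1)). ring. }
  rewrite <- E.
  generalize (is_series_scal lam _ _ Hw). apply is_series_ext.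
  intros n. change (lam * (a (S n) * pow_n lam n) = a (S n) * (lam * pow_n lam n)). ring.
Qed.

Fixpoint psum (lam : C) (a : nat -> C) (k : nat) : C :=
  match k with 0%nat => 0 | S k => psum lam a k + a k * pow_n lam k end.

Lemma psum_ext lam a b k : (forall j, (j < k)%nat -> a j = b j) -> psum lam a k = psum lam b k.
Proof.
  induction k; intros H; simpl. reflexivity.
  rewrite IHk. rewrite H. reflexivity. lia. intros j Hj; apply H; lia.
Qed.

Lemma ps_tail (lam : C) (B : R) a z : (Cmod lam < 1)%R -> (forall k, (Cmod (a k) <= B)%R) ->
  pseries_sum a lam z -> forall k, exists w, pseries_sum (fun j => a (k + j)%nat) lam w /\
    z = psum lam a k + pow_n lam k * w.
Proof.
  intros Hl HB Hz k. induction k.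
  - exists z. split. unfold pseries_sum in *. apply (is_series_ext _ _ _ (fun n => eq_refl) Hz).
    simpl. change (z = 0 + 1 * z). ring.
  - destruct IHk as [w [Hw Ez]].
    destruct (ps_exists lam B (fun j => a (S k + j)%nat) Hl (fun j => HB _)) as [w' Hw'].
    exists w'. split. exact Hw'.
    assert (Hw'' : pseries_sum (fun j => (fun j0 => a (k + j0)%nat) (S j)) lam w').
    { unfold pseries_sum in *. revert Hw'. apply is_series_ext. intros n.
      replace (k + S n)%nat with (S k + n)%nat by lia. reflexivity. }
    generalize (ps_step lam _ _ _ Hw Hw''). intros Ew. simpl in Ew.
    rewrite Ez, Ew. simpl. replace (k+0)%nat with k by lia.
    change (psum lam a k + pow_n lam k * (a k + lam * w') = psum lam a k + a k * pow_n lam k + lam * pow_n lam k * w').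
    ring.
Qed.

Lemma ps_bound (lam : C) (B : R) c v : (Cmod lam < 1)%R -> (forall k, (Cmod (c k) <= B)%R) ->
  pseries_sum c lam v -> (Cmod v <= B / (1 - Cmod lam))%R.
Proof.
  intros Hl Hc Hv.
  assert (HB : (0 <= B)%R) by (specialize (Hc 0%nat); generalize (Cmod_ge_0 (c 0%nat)); lra).
  assert (Hr : (0 <= Cmod lam)%R) by apply Cmod_ge_0.
  assert (Hpart : forall N, (Cmod (sum_n (fun n => (c n * pow_n lam n)%C) N) <= B / (1 - Cmod lam))%R).
  { intros N. unfold sum_n.
    eapply Rle_trans. apply (@norm_sum_n_m C_AbsRing C_NormedModule).
    eapply Rle_trans. apply (sum_n_m_le _ (fun k => (Cmod lam ^ k * B)%R)).
    { intros k. change (Cmod (c k * pow_n lam k) <= Cmod lam ^ k * B)%R.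
      rewrite Cmod_mult, Cmod_pow_n, Rmult_comm. apply Rmult_le_compat_l. apply pow_le; lra. apply Hc. }
    change (sum_n_m (fun k : nat => (Cmod lam ^ k * B)%R) 0 N) with (sum_n (fun k : nat => (Cmod lam ^ k * B)%R) N).
    rewrite sum_n_Reals, <- scal_sum, tech3 by lra.
    unfold Rdiv. rewrite <- Rmult_assoc. apply Rmult_le_compat_r.
    apply Rlt_le, Rinv_0_lt_compat; lra.
    assert (0 <= Cmod lam ^ S N)%R by (apply pow_le; lra). nra. }
  assert (Hlim : filterlim (fun N => Cmod (sum_n (fun n => (c n * pow_n lam n)%C) N)) eventually (locally (Cmod v))).
  { change (Cmod v) with (@norm C_AbsRing C_NormedModule v).
    apply (filterlim_comp nat C R (sum_n (fun n => (c n * pow_n lam n)%C)) (@norm C_AbsRing C_NormedModule) eventually (locally v)).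
    exact Hv.
    intros P HP. apply (@filterlim_norm C_AbsRing C_NormedModule v).
    exact HP. }
  assert (H := @filterlim_le nat eventually _ _ (fun _ => B / (1 - Cmod lam))%R (Cmod v) (B / (1 - Cmod lam))%R
     (filter_forall _ Hpart) Hlim (filterlim_const _)).
  exact H.
Qed.

Lemma digit_bound (m : nat) (d : nat -> C) : exists B, (0 <= B)%R /\ forall i, (i < m)%nat -> (Cmod (d i) <= B)%R.
Proof.
  induction m.
  - exists 0%R. split. lra. intros; lia.
  - destruct IHm as [B [HB H]]. exists (Rmax B (Cmod (d m))). split.
    eapply Rle_trans. exact HB. apply Rmax_l.
    intros i Hi. destruct (Nat.eq_dec i m). subst. apply Rmax_r.
    eapply Rle_trans. apply H. lia. apply Rmax_l.
Qed.

Lemma affine_cont (p q : C) (x : C) :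
  filterlim (fun w : C => p + q * w) (locally x) (locally (p + q * x)).
Proof.
  apply (@filterlim_comp_2 C C C C (locally x) (locally p) (locally (q * x)) (locally (p + q * x)) _ (fun _ : C => p) (fun w : C => q * w) (fun a b : C => @plus C_NormedModule a b)).
  apply filterlim_const.
  apply (@filterlim_scal_r C_AbsRing C_NormedModule q x).
  apply (@filterlim_plus C_AbsRing C_NormedModule p (q * x)).
Qed.

Lemma open_pre (U : C -> Prop) (p q : C) : @open C_UniformSpace U ->
  @open C_UniformSpace (fun w => U (p + q * w)).
Proof.
  intros HU. apply (open_comp (fun w : C => p + q * w) U). intros x _. apply affine_cont. exact HU.
Qed.

Lemma conn_affine X p q : connected_set X -> connected_set (fun z => exists w, X w /\ z = p + q * w).
Proof.
  intros HX U V HU HV Hcov [z1 [[w1 [Hw1 E1]] Hz1]] [z2 [[w2 [Hw2 E2]] Hz2]].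
  destruct (HX (fun w => U (p + q * w)) (fun w => V (p + q * w)) (open_pre U p q HU) (open_pre V p q HV))
    as [w [Hw [HUw HVw]]].
  - intros w Hw. apply Hcov. exists w. split; auto.
  - exists w1. subst. auto.
  - exists w2. subst. auto.
  - exists (p + q * w). split. exists w. auto. auto.
Qed.

Lemma conn_union X Y z : connected_set X -> connected_set Y -> X z -> Y z ->
  connected_set (fun w => X w \/ Y w).
Proof.
  intros HX HY Xz Yz U V HU HV Hcov [z1 [H1 U1]] [z2 [H2 V2]].
  assert (Hz : U z \/ V z) by (apply Hcov; auto).
  destruct Hz as [Uz | Vz].
  -
    destruct H2 as [X2 | Y2].
    + destruct (HX U V HU HV (fun w Hw => Hcov w (or_introl Hw)) (ex_intro _ z (conj Xz Uz)) (ex_intro _ z2 (conj X2 V2)))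
        as [w [Hw Hw']]. exists w. auto.
    + destruct (HY U V HU HV (fun w Hw => Hcov w (or_intror Hw)) (ex_intro _ z (conj Yz Uz)) (ex_intro _ z2 (conj Y2 V2)))
        as [w [Hw Hw']]. exists w. auto.
  - destruct H1 as [X1 | Y1].
    + destruct (HX U V HU HV (fun w Hw => Hcov w (or_introl Hw)) (ex_intro _ z1 (conj X1 U1)) (ex_intro _ z (conj Xz Vz)))
        as [w [Hw Hw']]. exists w. auto.
    + destruct (HY U V HU HV (fun w Hw => Hcov w (or_intror Hw)) (ex_intro _ z1 (conj Y1 U1)) (ex_intro _ z (conj Yz Vz)))
        as [w [Hw Hw']]. exists w. auto.
Qed.

Lemma conn_single z : connected_set (fun w => w = z).
Proof.
  intros U V HU HV Hcov [z1 [E1 U1]] [z2 [E2 V2]]. subst. exists z. auto.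
Qed.

Lemma Cmod_sub_le (x y : C) : (Cmod (x - y) <= Cmod x + Cmod y)%R.
Proof. eapply Rle_trans. apply Cmod_triangle. rewrite Cmod_opp. lra. Qed.

Definition in_DD (m : nat) (d : nat -> C) (x : C) : Prop :=
  exists i j, (i < m)%nat /\ (j < m)%nat /\ x = d i - d j.

Lemma DD_bound m d B x : (forall i, (i < m)%nat -> (Cmod (d i) <= B)%R) -> in_DD m d x ->
  (Cmod x <= 2 * B)%R.
Proof.
  intros HB [i [j [Hi [Hj E]]]]. subst. eapply Rle_trans. apply Cmod_sub_le.
  generalize (HB i Hi) (HB j Hj). lra.
Qed.

Lemma agree_close (lam : C) (B : R) g h vg vh K : (Cmod lam < 1)%R ->
  (forall k, (Cmod (g k) <= B)%R) -> (forall k, (Cmod (h k) <= B)%R) ->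
  (forall k, (k < K)%nat -> g k = h k) ->
  pseries_sum g lam vg -> pseries_sum h lam vh ->
  (Cmod (vg - vh) <= Cmod lam ^ K * (2 * (B / (1 - Cmod lam))))%R.
Proof.
  intros Hl Hg Hh Hagr Hvg Hvh.
  destruct (ps_tail lam B g vg Hl Hg Hvg K) as [wg [Hwg Eg]].
  destruct (ps_tail lam B h vh Hl Hh Hvh K) as [wh [Hwh Eh]].
  assert (Ep : psum lam g K = psum lam h K) by (apply psum_ext; auto).
  assert (E : vg - vh = pow_n lam K * (wg - wh)) by (rewrite Eg, Eh, Ep; ring).
  rewrite E, Cmod_mult, Cmod_pow_n.
  apply Rmult_le_compat_l. apply pow_le, Cmod_ge_0.
  eapply Rle_trans. apply Cmod_sub_le.
  generalize (ps_bound lam B _ wg Hl (fun k => Hg _) Hwg) (ps_bound lam B _ wh Hl (fun k => Hh _) Hwh). lra.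
Qed.

Lemma fin_min (m : nat) (P : nat -> R -> Prop) :
  (forall i e e', (0 < e')%R -> (e' <= e)%R -> P i e -> P i e') ->
  (forall i, (i < m)%nat -> exists e, (0 < e)%R /\ P i e) ->
  exists e, (0 < e)%R /\ forall i, (i < m)%nat -> P i e.
Proof.
  intros Hmon. induction m; intros H.
  - exists 1%R. split. lra. intros; lia.
  - destruct IHm as [e1 [He1 H1]]. intros i Hi; apply H; lia.
    destruct (H m (Nat.lt_succ_diag_r m)) as [e2 [He2 H2]].
    exists (Rmin e1 e2). split. apply Rmin_glb_lt; auto.
    intros i Hi. destruct (Nat.eq_dec i m).
    + subst. apply (Hmon m e2). apply Rmin_glb_lt; auto. apply Rmin_r. auto.
    + apply (Hmon i e1). apply Rmin_glb_lt; auto. apply Rmin_l. apply H1. lia.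
Qed.

Definition upd (s : nat -> C) (n : nat) (x : C) : nat -> C :=
  fun k => if Nat.eqb k n then x else s k.

Definition Gset (m : nat) (d : nat -> C) (lam : C) (N : nat) (g : nat -> C) : Prop :=
  in_B m d g /\ (forall f, in_F m d lam f -> exists k, (k <= N)%nat /\ f k <> g k).

Definition good (m : nat) (d : nat -> C) (lam : C) (N : nat) (n : nat) (s : nat -> C) : Prop :=
  forall e, (0 < e)%R -> exists g, Gset m d lam N g /\ (forall k, (k < n)%nat -> g k = s k) /\
    exists v, pseries_sum g lam v /\ (Cmod v < e)%R.

Lemma good_ext m d lam N n s : good m d lam N n s ->
  exists x, in_DD m d x /\ good m d lam N (S n) (upd s n x).
Proof.
  intros Hg. apply NNPP. intros Hno.
  assert (Hall : forall i j, (i < m)%nat -> (j < m)%nat -> exists e, (0 < e)%R /\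
     forall g, Gset m d lam N g -> (forall k, (k < S n)%nat -> g k = upd s n (d i - d j) k) ->
       forall v, pseries_sum g lam v -> (e <= Cmod v)%R).
  { intros i j Hi Hj. apply NNPP. intros Hne. apply Hno. exists (d i - d j). split.
    exists i, j. auto.
    intros e He. apply NNPP. intros Hne2. apply Hne. exists e. split. exact He.
    intros g HG Hag v Hv. apply Rnot_lt_le. intros Hlt. apply Hne2.
    exists g. split. exact HG. split. exact Hag. exists v. auto. }
  assert (Hi : forall i, (i < m)%nat -> exists e, (0 < e)%R /\ forall j, (j < m)%nat ->
     forall g, Gset m d lam N g -> (forall k, (k < S n)%nat -> g k = upd s n (d i - d j) k) ->
       forall v, pseries_sum g lam v -> (e <= Cmod v)%R).
  { intros i Hi. apply (fin_min m (fun j e => forall g, Gset m d lam N g ->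
       (forall k, (k < S n)%nat -> g k = upd s n (d i - d j) k) ->
       forall v, pseries_sum g lam v -> (e <= Cmod v)%R)).
    - intros j e e' He' Hle HP g HG Hag v Hv. eapply Rle_trans. exact Hle. eapply HP; eauto.
    - intros j Hj. apply Hall; auto. }
  destruct (fin_min m (fun i e => forall j, (j < m)%nat ->
     forall g, Gset m d lam N g -> (forall k, (k < S n)%nat -> g k = upd s n (d i - d j) k) ->
       forall v, pseries_sum g lam v -> (e <= Cmod v)%R)) as [e [He HP]].
  - intros i e e' He' Hle HP j Hj g HG Hag v Hv. eapply Rle_trans. exact Hle. eapply HP; eauto.
  - exact Hi.
  - destruct (Hg e He) as [g [HG [Hag [v [Hv Hlt]]]]].
    destruct HG as [[HDD H0] HF].
    destruct (HDD n) as [i [j [Hi' [Hj' Egn]]]].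
    assert (Hle : (e <= Cmod v)%R).
    { apply (HP i Hi' j Hj' g). split. split; auto. exact HF.
      intros k Hk. unfold upd. destruct (Nat.eqb_spec k n). subst. exact Egn.
      apply Hag. lia. exact Hv. }
    lra.
Qed.

Definition ch (m : nat) (d : nat -> C) (lam : C) (N : nat) (n : nat) (s : nat -> C) : C :=
  epsilon (inhabits (0:C)) (fun x => in_DD m d x /\ good m d lam N (S n) (upd s n x)).

Fixpoint hs (m : nat) (d : nat -> C) (lam : C) (N : nat) (n : nat) : nat -> C :=
  match n with
  | 0%nat => fun _ => 0
  | S n => upd (hs m d lam N n) n (ch m d lam N n (hs m d lam N n))
  end.

Lemma hs_good m d lam N : good m d lam N 0 (fun _ => 0) -> forall n,
  good m d lam N n (hs m d lam N n) /\ in_DD m d (hs m d lam N (S n) n).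
Proof.
  intros H0. induction n.
  - split. exact H0. simpl. unfold upd. simpl.
    apply (epsilon_spec (inhabits (0:C)) (fun x => in_DD m d x /\ good m d lam N 1 (upd (fun _ => 0) 0 x))).
    apply good_ext. exact H0.
  - destruct IHn as [IH _].
    assert (Hs := epsilon_spec (inhabits (0:C)) (fun x => in_DD m d x /\ good m d lam N (S n) (upd (hs m d lam N n) n x)) (good_ext _ _ _ _ _ _ IH)).
    fold (ch m d lam N n (hs m d lam N n)) in Hs.
    assert (G1 : good m d lam N (S n) (hs m d lam N (S n))) by (simpl; apply Hs).
    split. exact G1.
    assert (Hs2 := epsilon_spec (inhabits (0:C)) (fun x => in_DD m d x /\ good m d lam N (S (S n)) (upd (hs m d lam N (S n)) (S n) x)) (good_ext _ _ _ _ _ _ G1)).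
    simpl hs at 1. unfold upd at 1. rewrite Nat.eqb_refl. apply Hs2.
Qed.

Lemma hs_stable m d lam N : forall n k, (k < n)%nat -> hs m d lam N n k = hs m d lam N (S k) k.
Proof.
  induction n; intros k Hk. lia.
  destruct (Nat.eq_dec k n). subst. reflexivity.
  simpl hs at 1. unfold upd. destruct (Nat.eqb_spec k n). lia. apply IHn. lia.
Qed.

Lemma compact0 m d lam N : (Cmod lam < 1)%R ->
  exists c0, (0 < c0)%R /\ forall g, in_B m d g ->
    (forall f, in_F m d lam f -> exists k, (k <= N)%nat /\ f k <> g k) ->
    forall v, pseries_sum g lam v -> (c0 <= Cmod v)%R.
Proof.
  intros Hl. apply NNPP. intros Hno.
  assert (H0 : good m d lam N 0 (fun _ => 0)).
  { intros e He. apply NNPP. intros Hne. apply Hno. exists e. split. exact He.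
    intros g HB HF v Hv. apply Rnot_lt_le. intros Hlt. apply Hne.
    exists g. split. split; auto. split. intros; lia. exists v. auto. }
  destruct (digit_bound m d) as [B [HB0 HB]].
  set (h := fun k => hs m d lam N (S k) k).
  assert (Hhs := hs_good m d lam N H0).
  assert (Hagr : forall n k, (k < n)%nat -> hs m d lam N n k = h k) by (intros; apply hs_stable; auto).
  assert (HhDD : forall k, in_DD m d (h k)) by (intros k; apply Hhs).
  assert (Hhb : forall k, (Cmod (h k) <= 2 * B)%R) by (intros k; apply (DD_bound m d); auto).
  assert (HGb : forall g, Gset m d lam N g -> forall k, (Cmod (g k) <= 2 * B)%R).
  { intros g [[HDD _] _] k. apply (DD_bound m d); auto. apply HDD. }
  destruct (ps_exists lam (2 * B) h Hl Hhb) as [v Hv].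
  assert (Hv0 : v = 0).
  { destruct (Ceq_dec v 0) as [E|Hne]. exact E. exfalso.
    assert (Hpos : (0 < Cmod v)%R) by (apply Cmod_gt_0; exact Hne).
    set (e := (Cmod v / 2)%R).
    assert (Hr : (0 <= Cmod lam)%R) by apply Cmod_ge_0.
    destruct (pow_lt_1_zero (Cmod lam) ltac:(rewrite Rabs_pos_eq; lra) (e * (1 - Cmod lam) / (4 * B + 1))%R)
      as [K HK].
    { apply Rdiv_lt_0_compat. apply Rmult_lt_0_compat; unfold e; lra. lra. }
    specialize (HK K (le_n K)). rewrite Rabs_pos_eq in HK by (apply pow_le; lra).
    destruct (proj1 (Hhs K) e ltac:(unfold e; lra)) as [g [HG [Hag [vg [Hvg Hlt]]]]].
    assert (Hc := agree_close lam (2 * B) g h vg v K Hl (HGb g HG) Hhb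
       (fun k Hk => eq_trans (Hag k Hk) (Hagr K k Hk)) Hvg Hv).
    assert (Hb : (Cmod lam ^ K * (2 * (2 * B / (1 - Cmod lam))) < e)%R).
    { assert (H1 : (Cmod lam ^ K * (4 * B + 1) < e * (1 - Cmod lam))%R).
      { apply (Rmult_lt_compat_r (4 * B + 1)) in HK. unfold Rdiv in HK.
        rewrite Rmult_assoc, Rinv_l, Rmult_1_r in HK by lra. exact HK. lra. }
      assert (H2 : (Cmod lam ^ K * (2 * (2 * B / (1 - Cmod lam))) * (1 - Cmod lam) < e * (1 - Cmod lam))%R).
      { replace (Cmod lam ^ K * (2 * (2 * B / (1 - Cmod lam))) * (1 - Cmod lam))%R
          with (Cmod lam ^ K * (4 * B))%R by (field; lra).
        assert (0 <= Cmod lam ^ K)%R by (apply pow_le; lra). nra. }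
      apply Rmult_lt_reg_r in H2. exact H2. lra. }
    assert (Htri : (Cmod v <= Cmod vg + Cmod (vg - v))%R).
    { replace v with (vg - (vg - v)) at 1 by ring. apply Cmod_sub_le. }
    unfold e in *. lra. }
  subst v.
  assert (Hh0 : h 0%nat <> 0).
  { destruct (proj1 (Hhs 1%nat) 1%R ltac:(lra)) as [g [[[_ Hg0] _] [Hag _]]].
    rewrite <- (Hagr 1%nat 0%nat) by lia. rewrite <- Hag by lia. exact Hg0. }
  assert (HhF : in_F m d lam h).
  { split. split. exact HhDD. exact Hh0. exact Hv. }
  destruct (proj1 (Hhs (S N)) 1%R ltac:(lra)) as [g [[_ HF] [Hag _]]].
  destruct (HF h HhF) as [k [Hk Hne]]. apply Hne.
  rewrite Hag by lia. symmetry. apply Hagr. lia.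
Qed.

Lemma pow_le1 (x : R) n : (0 <= x <= 1)%R -> (x ^ n <= 1)%R.
Proof.
  intros Hx. induction n; simpl. lra.
  assert (0 <= x ^ n)%R by (apply pow_le; lra). nra.
Qed.

Lemma pow_anti (x : R) (a b : nat) : (0 <= x <= 1)%R -> (a <= b)%nat -> (x ^ b <= x ^ a)%R.
Proof.
  intros Hx Hab. replace b with (a + (b - a))%nat by lia. rewrite pow_add.
  assert (H1 := pow_le1 x (b - a) Hx).
  assert (0 <= x ^ a)%R by (apply pow_le; lra). nra.
Qed.

Lemma find_edge (Q : nat -> Prop) N j : Q N -> ~ Q (N + j)%nat ->
  exists l, (N <= l)%nat /\ Q l /\ ~ Q (S l).
Proof.
  revert N. induction j; intros N HQ Hn.
  - exfalso. apply Hn. replace (N + 0)%nat with N by lia. exact HQ.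
  - destruct (classic (Q (S N))) as [H|H].
    + destruct (IHj (S N) H) as [l [Hl [Ql Hnl]]].
      replace (S N + j)%nat with (N + S j)%nat by lia. exact Hn.
      exists l. split. lia. auto.
    + exists N. auto.
Qed.

Lemma sepB (m : nat) (d : nat -> C) (lam : C) (Hl : (Cmod lam < 1)%R)
  (HC1 : exists C1 : R, (0 < C1)%R /\ exists N : nat, forall n : nat, (N <= n)%nat ->
     forall f g : nat -> C, in_F m d lam f -> in_B m d g -> common_part f g n ->
     forall v, pseries_sum g lam v -> (C1 * Cmod lam ^ n <= Cmod v)%R) :
  exists c, (0 < c)%R /\ forall n g, in_B m d g ->
    (forall f, in_F m d lam f -> exists k, (k < n)%nat /\ f k <> g k) ->
    forall v, pseries_sum g lam v -> (c * Cmod lam ^ n <= Cmod v)%R.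
Proof.
  destruct HC1 as [C1 [HC1p [N HN]]].
  destruct (compact0 m d lam N Hl) as [c0 [Hc0 H0]].
  assert (Hr : (0 <= Cmod lam <= 1)%R) by (split; [apply Cmod_ge_0 | lra]).
  exists (Rmin C1 c0). split. apply Rmin_glb_lt; auto.
  intros n g Hg Hhyp v Hv.
  set (Q := fun l => exists f, in_F m d lam f /\ forall k, (k <= l)%nat -> f k = g k).
  destruct (classic (Q N)) as [HQ | HQ].
  - assert (HnQ : ~ Q (N + n)%nat).
    { intros [f [Hf Hag]]. destruct (Hhyp f Hf) as [k [Hk Hne]]. apply Hne, Hag. lia. }
    destruct (find_edge Q N n HQ HnQ) as [l [HNl [[f [Hf Hag]] HnS]]].
    assert (Hln : (l < n)%nat).
    { destruct (Nat.lt_ge_cases l n) as [H|H]. exact H. exfalso.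
      destruct (Hhyp f Hf) as [k [Hk Hne]]. apply Hne, Hag. lia. }
    assert (Hcp : common_part f g l).
    { split. intros k Hk. apply Hag. lia.
      intros E. apply HnS. exists f. split. exact Hf. intros k Hk.
      destruct (Nat.eq_dec k (S l)). subst. exact E. apply Hag. lia. }
    assert (H1 := HN l HNl f g Hf Hg Hcp v Hv).
    eapply Rle_trans. 2: exact H1.
    apply Rmult_le_compat. apply Rlt_le, Rmin_glb_lt; auto. apply pow_le; lra.
    apply Rmin_l. apply pow_anti. exact Hr. lia.
  - assert (Hc : (c0 <= Cmod v)%R).
    { apply (H0 g Hg). 2: exact Hv. intros f Hf. apply NNPP. intros Hn. apply HQ.
      exists f. split. exact Hf. intros k Hk. apply NNPP. intros Hne. apply Hn. exists k. auto. }
    assert (H1 := pow_le1 _ n Hr). assert (0 <= Cmod lam ^ n)%R by (apply pow_le; lra).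
    assert (Hm : (Rmin C1 c0 <= c0)%R) by apply Rmin_r.
    assert (0 < Rmin C1 c0)%R by (apply Rmin_glb_lt; auto).
    nra.
Qed.

Lemma min_exists (P : nat -> Prop) : (exists k, P k) -> exists p, P p /\ forall k, (k < p)%nat -> ~ P k.
Proof.
  intros [k Hk]. revert Hk. induction k using (well_founded_induction Wf_nat.lt_wf). intros Hk.
  destruct (classic (exists j, (j < k)%nat /\ P j)) as [[j [Hj Pj]] | Hn].
  - apply (H j Hj Pj).
  - exists k. split. exact Hk. intros j Hj Pj. apply Hn. eauto.
Qed.

Lemma psum_zero lam k : psum lam (fun _ => 0) k = 0.
Proof. induction k; simpl. reflexivity. rewrite IHk. ring. Qed.

Definition digits (m : nat) (d : nat -> C) (a : nat -> C) : Prop := forall k, in_digits m d (a k).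

Lemma digits_bound m d B a : (forall i, (i < m)%nat -> (Cmod (d i) <= B)%R) -> digits m d a ->
  forall k, (Cmod (a k) <= B)%R.
Proof. intros HB Ha k. destruct (Ha k) as [i [Hi E]]. rewrite E. auto. Qed.

Lemma sepE (m : nat) (d : nat -> C) (lam : C)
  (Hd : forall i j, (i < m)%nat -> (j < m)%nat -> d i = d j -> i = j)
  (Hl : (Cmod lam < 1)%R) (c : R)
  (Hc : forall n g, in_B m d g ->
    (forall f, in_F m d lam f -> exists k, (k < n)%nat /\ f k <> g k) ->
    forall v, pseries_sum g lam v -> (c * Cmod lam ^ n <= Cmod v)%R)
  n a b x y : digits m d a -> digits m d b -> pseries_sum a lam x -> pseries_sum b lam y ->
  ~ (exists a' b', digits m d a' /\ digits m d b' /\ (forall k, (k < n)%nat -> a' k = a k) /\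
       (forall k, (k < n)%nat -> b' k = b k) /\ exists v, pseries_sum a' lam v /\ pseries_sum b' lam v) ->
  (c * Cmod lam ^ n <= Cmod (x - y))%R.
Proof.
  intros Ha Hb Hx Hy Hno.
  destruct (digit_bound m d) as [B [HB0 HB]].
  assert (Hab := digits_bound m d B a HB Ha). assert (Hbb := digits_bound m d B b HB Hb).
  assert (Hex : exists k, (k < n)%nat /\ a k <> b k).
  { apply NNPP. intros Hn. apply Hno. exists a, a. split. auto. split. auto. split. auto.
    split. intros k Hk. apply NNPP. intros Hne. apply Hn. exists k. auto.
    exists x. auto. }
  destruct (min_exists _ Hex) as [p [[Hpn Hp] Hmin]].
  assert (Hbelow : forall k, (k < p)%nat -> a k = b k).
  { intros k Hk. apply NNPP. intros Hne. apply (Hmin k Hk). split. lia. exact Hne. }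
  destruct (ps_tail lam B a x Hl Hab Hx p) as [wa [Hwa Ea]].
  destruct (ps_tail lam B b y Hl Hbb Hy p) as [wb [Hwb Eb]].
  set (g := fun j => a (p + j)%nat - b (p + j)%nat).
  assert (Hg : pseries_sum g lam (wa - wb)) by (apply ps_minus; auto).
  assert (HgB : in_B m d g).
  { split.
    - intros j. destruct (Ha (p + j)%nat) as [i [Hi Ei]]. destruct (Hb (p + j)%nat) as [i' [Hi' Ei']].
      exists i, i'. unfold g. rewrite Ei, Ei'. auto.
    - unfold g. replace (p + 0)%nat with p by lia. intros E. apply Hp.
      apply (f_equal (fun z => z + b p)) in E. ring_simplify in E. exact E. }
  assert (Hhyp : forall f, in_F m d lam f -> exists k, (k < n - p)%nat /\ f k <> g k).
  { intros f [[HfDD Hf0] Hf]. apply NNPP. intros Hn.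
    assert (Hag : forall k, (k < n - p)%nat -> f k = g k).
    { intros k Hk. apply NNPP. intros Hne. apply Hn. exists k. auto. }
    set (fp := fun j => epsilon (inhabits (0%nat, 0%nat))
       (fun pr => (fst pr < m)%nat /\ (snd pr < m)%nat /\ f j = d (fst pr) - d (snd pr))).
    assert (Hfp : forall j, (fst (fp j) < m)%nat /\ (snd (fp j) < m)%nat /\ f j = d (fst (fp j)) - d (snd (fp j))).
    { intros j. unfold fp. apply epsilon_spec. destruct (HfDD j) as [i [i' H]]. exists (i, i'). exact H. }
    set (a' := fun k => if Nat.ltb k n then a k else d (fst (fp (k - p)%nat))).
    set (b' := fun k => if Nat.ltb k n then b k else d (snd (fp (k - p)%nat))).
    assert (Ha' : digits m d a').
    { intros k. unfold a'. destruct (Nat.ltb_spec k n). apply Ha. exists (fst (fp (k - p)%nat)). split. apply Hfp. auto. }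
    assert (Hb' : digits m d b').
    { intros k. unfold b'. destruct (Nat.ltb_spec k n). apply Hb. exists (snd (fp (k - p)%nat)). split. apply Hfp. auto. }
    apply Hno. exists a', b'. split. exact Ha'. split. exact Hb'.
    split. intros k Hk. unfold a'. destruct (Nat.ltb_spec k n). auto. lia.
    split. intros k Hk. unfold b'. destruct (Nat.ltb_spec k n). auto. lia.
    destruct (ps_exists lam B a' Hl (digits_bound m d B a' HB Ha')) as [va Hva].
    destruct (ps_exists lam B b' Hl (digits_bound m d B b' HB Hb')) as [vb Hvb].
    exists va. split. exact Hva.
    assert (Hdiff := ps_minus lam _ _ _ _ Hva Hvb).
    assert (Hdb : forall k, (Cmod (a' k - b' k) <= 2 * B)%R).
    { intros k. eapply Rle_trans. apply Cmod_sub_le.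
      generalize (digits_bound m d B a' HB Ha' k) (digits_bound m d B b' HB Hb' k). lra. }
    destruct (ps_tail lam (2 * B) _ _ Hl Hdb Hdiff p) as [w [Hw Ew]].
    assert (Hw0 : w = 0).
    { apply (ps_unique lam f). 2: exact Hf.
      unfold pseries_sum in *. revert Hw. apply is_series_ext. intros j.
      f_equal. unfold a', b'. destruct (Nat.ltb_spec (p + j) n).
      - rewrite Hag by lia. unfold g. reflexivity.
      - replace (p + j - p)%nat with j by lia. symmetry. apply Hfp. }
    assert (Hps : psum lam (fun k => a' k - b' k) p = 0).
    { rewrite <- (psum_zero lam p). apply psum_ext. intros k Hk.
      unfold a', b'. destruct (Nat.ltb_spec k n). rewrite Hbelow by lia. ring. lia. }
    rewrite Hps, Hw0 in Ew. assert (Evab : va = vb).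
    { apply (f_equal (fun z => z + vb)) in Ew. ring_simplify in Ew. exact Ew. }
    rewrite Evab. exact Hvb. }
  assert (H1 := Hc (n - p)%nat g HgB Hhyp (wa - wb) Hg).
  assert (Exy : x - y = pow_n lam p * (wa - wb)).
  { rewrite Ea, Eb, (psum_ext lam a b p Hbelow). ring. }
  rewrite Exy, Cmod_mult, Cmod_pow_n.
  replace n with (p + (n - p))%nat at 1 by lia. rewrite pow_add.
  assert (0 <= Cmod lam ^ p)%R by (apply pow_le, Cmod_ge_0).
  nra.
Qed.

Lemma E_bound m d lam B z : (Cmod lam < 1)%R -> (forall i, (i < m)%nat -> (Cmod (d i) <= B)%R) ->
  attractor m d lam z -> (Cmod z <= B / (1 - Cmod lam))%R.
Proof.
  intros Hl HB [a [Ha Hz]]. apply (ps_bound lam B a z Hl (digits_bound m d B a HB Ha) Hz).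
Qed.

Lemma cyl_in_E m d lam a k w : (Cmod lam < 1)%R -> digits m d a -> attractor m d lam w ->
  attractor m d lam (psum lam a k + pow_n lam k * w).
Proof.
  intros Hl Ha [e [He Hw]].
  destruct (digit_bound m d) as [B [HB0 HB]].
  set (s := fun j => if Nat.ltb j k then a j else e (j - k)%nat).
  assert (Hs : digits m d s) by (intros j; unfold s; destruct (Nat.ltb_spec j k); auto).
  destruct (ps_exists lam B s Hl (digits_bound m d B s HB Hs)) as [z Hz].
  destruct (ps_tail lam B s z Hl (digits_bound m d B s HB Hs) Hz k) as [w' [Hw' Ez]].
  assert (Ew : w' = w).
  { apply (ps_unique lam e). 2: exact Hw. unfold pseries_sum in *. revert Hw'. apply is_series_ext.
    intros j. unfold s. destruct (Nat.ltb_spec (k + j) k). lia. replace (k + j - k)%nat with j by lia. reflexivity. }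
  assert (Ep : psum lam s k = psum lam a k).
  { apply psum_ext. intros j Hj. unfold s. destruct (Nat.ltb_spec j k). reflexivity. lia. }
  exists s. split. exact Hs. rewrite <- Ep, <- Ew, <- Ez. exact Hz.
Qed.

Lemma pt_in_cyl m d lam a z k : (Cmod lam < 1)%R -> digits m d a -> pseries_sum a lam z ->
  exists w, attractor m d lam w /\ z = psum lam a k + pow_n lam k * w.
Proof.
  intros Hl Ha Hz. destruct (digit_bound m d) as [B [HB0 HB]].
  destruct (ps_tail lam B a z Hl (digits_bound m d B a HB Ha) Hz k) as [w [Hw Ez]].
  exists w. split. exists (fun j => a (k + j)%nat). split. intros j; apply Ha. exact Hw. exact Ez.
Qed.

Lemma dist4 (Pa Pb q u1 u2 w1 w2 : C) (M : R) : Pa + q * u1 = Pb + q * u2 ->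
  (Cmod u1 <= M)%R -> (Cmod u2 <= M)%R -> (Cmod w1 <= M)%R -> (Cmod w2 <= M)%R ->
  (Cmod ((Pa + q * w1) - (Pb + q * w2)) <= Cmod q * (4 * M))%R.
Proof.
  intros E H1 H2 H3 H4.
  assert (Ex : (Pa + q * w1) - (Pb + q * w2) = q * ((w1 - u1) + (u2 - w2))).
  { replace Pb with (Pa + q * u1 - q * u2) by (rewrite E; ring). ring. }
  rewrite Ex, Cmod_mult. apply Rmult_le_compat_l. apply Cmod_ge_0.
  eapply Rle_trans. apply Cmod_triangle.
  generalize (Cmod_sub_le w1 u1) (Cmod_sub_le u2 w2). lra.
Qed.

Lemma ps_at0 c v B : (forall k, (Cmod (c k) <= B)%R) -> pseries_sum c 0 v -> v = c 0%nat.
Proof.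
  intros Hc Hv.
  assert (Hl : (Cmod 0 < 1)%R) by (rewrite Cmod_0; lra).
  destruct (ps_exists 0 B (fun j => c (S j)) Hl (fun j => Hc _)) as [w Hw].
  rewrite (ps_step 0 c v w Hv Hw). ring.
Qed.

Theorem theorem6p1 (m : nat) (d : nat -> C) (lam : C)
  (Hm : (2 <= m)%nat)
  (Hd : forall i j, (i < m)%nat -> (j < m)%nat -> d i = d j -> i = j)
  (Hlam : (Cmod lam < 1)%R)
  (Hconn : connected_set (attractor m d lam))
  (Hfin : finite_set (overlap m d lam))
  (HC1 : exists C1 : R, (0 < C1)%R /\ exists N : nat, forall n : nat, (N <= n)%nat ->
     forall f g : nat -> C, in_F m d lam f -> in_B m d g -> common_part f g n ->
     forall v, pseries_sum g lam v -> (C1 * Cmod lam ^ n <= Cmod v)%R) :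
  bounded_turning (attractor m d lam).
Proof.
  split. exact Hconn.
  destruct (sepB m d lam Hlam HC1) as [c [Hc0 Hc]].
  destruct (digit_bound m d) as [B [HB0 HB]].
  assert (Hr0 : (0 <= Cmod lam)%R) by apply Cmod_ge_0.
  set (M := (B / (1 - Cmod lam))%R).
  assert (HM : (0 <= M)%R) by (unfold M; apply Rdiv_le_0_compat; lra).
  assert (HEb : forall z, attractor m d lam z -> (Cmod z <= M)%R) by (intros z Hz; apply (E_bound m d lam B); auto).
  assert (Hfar : forall L z0 z1, (2 * M / c <= L)%R -> attractor m d lam z0 -> attractor m d lam z1 ->
     (c <= Cmod (z0 - z1))%R -> exists Y : C -> Prop,
      (forall z, Y z -> attractor m d lam z) /\ connected_set Y /\ Y z0 /\ Y z1 /\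
      (forall y y', Y y -> Y y' -> (Cmod (y - y') <= L * Cmod (z0 - z1))%R)).
  { intros L z0 z1 HL H0 H1 Hr. exists (attractor m d lam). split. auto. split. exact Hconn.
    split. exact H0. split. exact H1. intros y y' Hy Hy'.
    eapply Rle_trans. apply Cmod_sub_le.
    assert (H2 : (2 * M <= L * Cmod (z0 - z1))%R).
    { assert (E2 : (2 * M = (2 * M / c) * c)%R) by (field; lra).
      assert (0 <= 2 * M / c)%R by (apply Rdiv_le_0_compat; lra).
      rewrite E2. apply Rmult_le_compat; lra. }
    generalize (HEb y Hy) (HEb y' Hy'). lra. }
  assert (Hsame : forall L z, attractor m d lam z -> exists Y : C -> Prop,
      (forall w, Y w -> attractor m d lam w) /\ connected_set Y /\ Y z /\ Y z /\
      (forall y y', Y y -> Y y' -> (Cmod (y - y') <= L * Cmod (z - z))%R)).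
  { intros L z Hz. exists (fun w => w = z). split. intros w Hw; subst; auto.
    split. apply conn_single. split. auto. split. auto.
    intros y y' Hy Hy'. subst. replace (z - z) with (RtoC 0) by ring. rewrite Cmod_0. lra. }
  destruct (Req_dec (Cmod lam) 0) as [Hz | Hpos].
  - apply Cmod_eq_0 in Hz. subst lam.
    exists (2 * M / c)%R. intros z0 z1 H0 H1.
    destruct (Ceq_dec z0 z1) as [E | Hne]. subst. apply Hsame. exact H0.
    apply Hfar; auto. lra.
    destruct H0 as [a [Ha Hz0]]. destruct H1 as [b [Hb Hz1]].
    assert (Ea := ps_at0 a z0 B (digits_bound m d B a HB Ha) Hz0).
    assert (Eb := ps_at0 b z1 B (digits_bound m d B b HB Hb) Hz1).
    set (g := fun j => a j - b j).
    assert (Hg : pseries_sum g 0 (z0 - z1)) by (apply ps_minus; auto).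
    assert (HgB : in_B m d g).
    { split.
      - intros j. destruct (Ha j) as [i [Hi Ei]]. destruct (Hb j) as [i' [Hi' Ei']].
        exists i, i'. unfold g. rewrite Ei, Ei'. auto.
      - unfold g. rewrite <- Ea, <- Eb. intros E. apply Hne.
        apply (f_equal (fun z => z + z1)) in E. ring_simplify in E. exact E. }
    assert (H := Hc 0%nat g HgB).
    assert (Hhyp : forall f, in_F m d 0 f -> exists k, (k < 0)%nat /\ f k <> g k).
    { intros f [[HfDD Hf0] Hf]. exfalso. apply Hf0.
      symmetry. apply (ps_at0 f 0 (2 * B)). intros k. apply (DD_bound m d); auto. apply HfDD. exact Hf. }
    specialize (H Hhyp _ Hg). simpl in H. lra.
  - assert (Hp : (0 < Cmod lam)%R) by lra.
    exists (2 * M / c + 4 * M / (c * Cmod lam))%R. intros z0 z1 H0 H1.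
    assert (Hx : (0 <= 4 * M / (c * Cmod lam))%R) by (apply Rdiv_le_0_compat; nra).
    destruct (Ceq_dec z0 z1) as [E | Hne]. subst. apply Hsame. exact H0.
    assert (Hrpos : (0 < Cmod (z0 - z1))%R).
    { apply Cmod_gt_0. intros E. apply Hne. apply (f_equal (fun z => z + z1)) in E. ring_simplify in E. exact E. }
    destruct (Rle_lt_dec c (Cmod (z0 - z1))) as [Hfr | Hnear].
    { apply Hfar; auto. lra. }
    destruct H0 as [a [Ha Hz0]]. destruct H1 as [b [Hb Hz1]].
    destruct (pow_lt_1_zero (Cmod lam) ltac:(rewrite Rabs_pos_eq; lra) (Cmod (z0 - z1) / c)%R)
      as [N HN]. apply Rdiv_lt_0_compat; lra.
    specialize (HN N (le_n N)). rewrite Rabs_pos_eq in HN by (apply pow_le; lra).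
    set (Q := fun j => (Cmod (z0 - z1) < c * Cmod lam ^ j)%R).
    assert (HQ0 : Q 0%nat) by (unfold Q; simpl; lra).
    assert (HQN : ~ Q (0 + N)%nat).
    { unfold Q. simpl. intros Hlt.
      apply (Rmult_lt_compat_l c) in HN; [|lra].
      replace (c * (Cmod (z0 - z1) / c))%R with (Cmod (z0 - z1)) in HN by (field; lra). lra. }
    destruct (find_edge Q 0 N HQ0 HQN) as [k [_ [Qk Qk1]]].
    unfold Q in Qk, Qk1.
    assert (Hint : exists a' b', digits m d a' /\ digits m d b' /\ (forall j, (j < k)%nat -> a' j = a j) /\
       (forall j, (j < k)%nat -> b' j = b j) /\ exists v, pseries_sum a' lam v /\ pseries_sum b' lam v).
    { apply NNPP. intros Hno.
      assert (H := sepE m d lam Hd Hlam c Hc k a b z0 z1 Ha Hb Hz0 Hz1 Hno). lra. }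
    destruct Hint as [a' [b' [Ha' [Hb' [Haa [Hbb [v [Hva Hvb]]]]]]]].
    destruct (pt_in_cyl m d lam a' v k Hlam Ha' Hva) as [u1 [Hu1 Eu1]].
    destruct (pt_in_cyl m d lam b' v k Hlam Hb' Hvb) as [u2 [Hu2 Eu2]].
    rewrite (psum_ext lam a' a k Haa) in Eu1. rewrite (psum_ext lam b' b k Hbb) in Eu2.
    destruct (pt_in_cyl m d lam a z0 k Hlam Ha Hz0) as [w0 [Hw0 Ew0]].
    destruct (pt_in_cyl m d lam b z1 k Hlam Hb Hz1) as [w1 [Hw1 Ew1]].
    set (Pa := psum lam a k). set (Pb := psum lam b k). set (q := pow_n lam k).
    fold Pa q in Eu1, Ew0. fold Pb q in Eu2, Ew1.
    assert (Hbound : (Cmod q * (4 * M) <= (2 * M / c + 4 * M / (c * Cmod lam)) * Cmod (z0 - z1))%R).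
    { unfold q. rewrite Cmod_pow_n.
      assert (Ex : (4 * M = 4 * M / (c * Cmod lam) * (c * Cmod lam))%R) by (field; lra).
      assert (Hk1 : (c * Cmod lam ^ S k <= Cmod (z0 - z1))%R) by lra.
      simpl in Hk1.
      assert (0 <= 2 * M / c)%R by (apply Rdiv_le_0_compat; lra).
      assert (0 <= Cmod lam ^ k)%R by (apply pow_le; lra).
      set (X := (4 * M / (c * Cmod lam))%R) in *.
      rewrite Ex.
      assert (H3 : (Cmod lam ^ k * (X * (c * Cmod lam)) = X * (c * (Cmod lam * Cmod lam ^ k)))%R) by ring.
      rewrite H3.
      assert (H4 : (X * (c * (Cmod lam * Cmod lam ^ k)) <= X * Cmod (z0 - z1))%R)
        by (apply Rmult_le_compat_l; lra).
      assert (0 <= 2 * M / c * Cmod (z0 - z1))%R by (apply Rmult_le_pos; lra).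
      lra. }
    exists (fun z => (exists w, attractor m d lam w /\ z = Pa + q * w) \/
                     (exists w, attractor m d lam w /\ z = Pb + q * w)).
    split.
    { intros z [[w [Hw E]] | [w [Hw E]]]; subst; apply cyl_in_E; auto. }
    split.
    { apply (conn_union _ _ v). apply conn_affine; exact Hconn. apply conn_affine; exact Hconn.
      exists u1. auto. exists u2. auto. }
    split. left. exists w0. auto.
    split. right. exists w1. auto.
    intros y y' Hy Hy'. eapply Rle_trans. 2: exact Hbound.
    assert (Euv : Pa + q * u1 = Pb + q * u2) by (rewrite <- Eu1, <- Eu2; reflexivity).
    destruct Hy as [[w [Hw E]] | [w [Hw E]]]; destruct Hy' as [[w' [Hw' E']] | [w' [Hw' E']]]; subst y y'.
    + apply (dist4 Pa Pa q 0 0); auto; rewrite ?Cmod_0; auto.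
    + apply (dist4 Pa Pb q u1 u2); auto.
    + apply (dist4 Pb Pa q u2 u1); auto.
    + apply (dist4 Pb Pb q 0 0); auto; rewrite ?Cmod_0; auto.
Qed.
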